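(* Let $M$ be a $T_0$-algebra. An element $x\in M$ is an atom if and only if for every $u\in\mathcal O M$ we have: $x\le u$ iff $x\not\le\neg u$.
   Context: An MT-algebra is a pair $(M,\square)$ where $M$ is a complete boolean algebra and $\square:M\to M$ satisfies $\square 1=1$, $\square(a\wedge b)=\square a\wedge\square b$, $\square a\le a$, $\square a\le\square\square a$; $\Diamond a=\neg\square\neg a$; $\mathcal O M=\{a:\square a=a\}$ (open elements), $\mathcal C M=\{a:\Diamond a=a\}$ (closed elements). An element is saturated if it is a meet of a subset of $\mathcal O M$, and weakly locally closed if it is of the form $s\wedge c$ with $s$ saturated and $c$ closed. $M$ is a $T_0$-algebra if every element of $M$ is a join of weakly locally closed elements. *)

(* Defs.v *)
(* boolean algebras = ctbDistrLatticeType (complemented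
   distributive lattices with top and bottom); completeness is a hypothesis. *)
From HB Require Import structures.
From mathcomp Require Import all_boot all_order.
Set Implicit Arguments. Unset Strict Implicit. Unset Printing Implicit Defensive.
Import Order.Theory.
Local Open Scope order_scope.

Section MTDefs.
Context {d : Order.disp_t} {T : ctbDistrLatticeType d}.

Definition is_join (S : T -> Prop) (x : T) : Prop :=
  (forall y, S y -> y <= x) /\ (forall z, (forall y, S y -> y <= z) -> x <= z).

Definition is_meet (S : T -> Prop) (x : T) : Prop :=
  (forall y, S y -> x <= y) /\ (forall z, (forall y, S y -> z <= y) -> z <= x).

Definition complete_lattice : Prop := forall S : T -> Prop, exists x, is_join S x.

Definition MT_axioms (box : T -> T) : Prop :=
  [/\ box \top = \top,
      (forall a b, box (a `&` b) = box a `&` box b),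
      (forall a, box a <= a)
    & (forall a, box a <= box (box a))].

Definition diamond (box : T -> T) (a : T) : T := ~` box (~` a).

Definition is_open (box : T -> T) (a : T) : Prop := box a = a.
Definition is_closed (box : T -> T) (a : T) : Prop := diamond box a = a.

Definition saturated (box : T -> T) (s : T) : Prop :=
  exists S : T -> Prop, (forall y, S y -> is_open box y) /\ is_meet S s.

Definition weakly_locally_closed (box : T -> T) (x : T) : Prop :=
  exists s c, [/\ saturated box s, is_closed box c & x = s `&` c].

Definition T0_algebra (box : T -> T) : Prop :=
  forall x : T, exists S : T -> Prop,
    (forall y, S y -> weakly_locally_closed box y) /\ is_join S x.

Definition atom (x : T) : Prop :=
  x <> \bot /\ forall y, y <= x -> y = \bot \/ y = x.

End MTDefs.

(* Main.v *)
Require Import Defs.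
From HB Require Import structures.
From mathcomp Require Import all_boot all_order.
From Stdlib Require Import Classical.
Import Order.Theory.
Local Open Scope order_scope.

Lemma both_bot (d : Order.disp_t) (T : ctbDistrLatticeType d) (w a : T) :
  w <= a -> w <= ~` a -> w = \bot.
Proof.
move=> h1 h2; apply/eqP; rewrite -lex0 -(meetxC a) lexI h1 h2 //.
Qed.

Arguments both_bot {d T w} a _ _.

Theorem lemma5p3 (d : Order.disp_t) (T : ctbDistrLatticeType d) (box : T -> T)
  (hcomplete : complete_lattice (T := T)) (hMT : MT_axioms box)
  (hT0 : T0_algebra box) (x : T) :
  atom x <-> (forall u : T, is_open box u -> ((x <= u) <-> ~ (x <= ~` u))).
Proof.
split.
- move=> [xn0 hat] u _; split.
  + move=> h1 h2; by apply: xn0; apply: (both_bot u).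
  + move=> h; have [e|e] := hat (x `&` ~` u) (leIl _ _).
    * by move/eqP: e; rewrite disj_leC complK.
    * by exfalso; apply: h; rewrite -e leIr.
- move=> H.
  have dich : forall u, is_open box u -> x <= u \/ x <= ~` u.
    move=> u hu; case: (boolP (x <= u)) => h; [by left|right].
    have [_ h2] := H u hu; case: (boolP (x <= ~` u)) => // h3.
    by exfalso; move/negP: h; apply; apply: h2; apply/negP.
  case: hMT => box1 boxI boxle boxbox.
  have xn0 : x <> \bot.
    move=> e; have [h _] := H \top box1; apply: h; first by rewrite lex1.
    by rewrite e le0x.
  have key : forall w, weakly_locally_closed box w -> w <= x -> w = \bot \/ x <= w.
    move=> w [s [c [[S [hSo [hSl hSg]]] hc ->]]] wx.
    have cop : is_open box (~` c).
      rewrite /is_open; move: hc; rewrite /is_closed /diamond => e.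
      by rewrite -{2}e complK.
    have [xc|xc] := dich _ cop.
      left; apply: (both_bot c); first exact: leIr.
      exact: le_trans wx xc.
    rewrite complK in xc.
    have [xs|xs] := classic (forall y, S y -> x <= y).
      by right; rewrite lexI hSg // xc.
    have [u [Su xu]] : exists u, S u /\ ~ (x <= u).
      apply: NNPP => hn; apply: xs => y Sy; apply: NNPP => hy; apply: hn.
      by exists y.
    have [xu'|xu'] := dich _ (hSo _ Su); first by [].
    left; apply: (both_bot u).
      exact: le_trans (leIl _ _) (hSl _ Su).
    exact: le_trans wx xu'.
  split => // y yx.
  have [S [hSw [hSl hSg]]] := hT0 y.
  have [allb|] := classic (forall w, S w -> w = \bot).
    left; apply/eqP; rewrite -lex0; apply: hSg => w Sw; by rewrite (allb w Sw).
  move=> hn; have [w [Sw wn0]] : exists w, S w /\ w <> \bot.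
    apply: NNPP => hn'; apply: hn => w Sw; apply: NNPP => h; apply: hn'.
    by exists w.
  have [//|xw] := key w (hSw _ Sw) (le_trans (hSl _ Sw) yx).
  right; apply/eqP; rewrite eq_le yx.
  exact: le_trans xw (hSl _ Sw).
Qed.
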